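(* Let $t$ be odd and let $n_1,\dots,n_j$ be nonnegative integers. Then $\mathcal{L}^{(t)}_L\big(\prod_{i=1}^{j}L^{(t)}_{n_i}(x)\big)$ equals the number of inhomogeneous coverings of $K_{n_1,n_1}\sqcup\dots\sqcup K_{n_j,n_j}$ by $t$-paths, i.e. the number of sets of pairwise vertex-disjoint $t$-paths covering all vertices of the complete bipartite graph $K_{A,B}$, where $A$ (resp. $B$) is the disjoint union of the left (resp. right) parts of $K_{n_1,n_1},\dots,K_{n_j,n_j}$, such that no path has all its vertices in a single $K_{n_i,n_i}$.
   Context: Let $t\ge1$ be odd and $k=(t+1)/2$. In a complete bipartite graph, a $t$-path is a subgraph isomorphic to a path with $t$ edges (it has $k$ vertices on each side). $L^{(t)}_n$ is the polynomial with $L^{(t)}_n(x^2)=\sum_F(-1)^{|F|}x^{\,2n-(t+1)|F|}$, the sum over all families $F$ of pairwise vertex-disjoint $t$-paths in $K_{n,n}$. Let $\mu^{(t)}_n$ be the number of coverings of all vertices of $K_{n,n}$ by pairwise vertex-disjoint $t$-paths ($\mu^{(t)}_0=1$), and let $\mathcal{L}^{(t)}_L$ be the linear functional with $\mathcal{L}^{(t)}_L(x^n)=\mu^{(t)}_n$. *)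

(* Defs.v *)
From HB Require Import structures.
From mathcomp Require Import all_boot all_order all_algebra.
Set Implicit Arguments. Unset Strict Implicit. Unset Printing Implicit Defensive.
Import Order.TTheory GRing.Theory Num.Theory.
Local Open Scope ring_scope.

(* k = (t+1)/2 : number of vertices on each side of a t-path *)
Definition kt (t : nat) : nat := (t.+1)./2.

Section Bip.
Variables (U V : finType).
(* A subgraph of the complete bipartite graph K_{U,V} (left part U, right
   part V) without isolated vertices is given by its edge set {set U * V}. *)
Definition lefts (P : {set U * V}) : {set U} := [set e.1 | e in P].
Definition rights (P : {set U * V}) : {set V} := [set e.2 | e in P].

(* P is (the edge set of) a path with 2k-1 edges:
   a_0 - b_0 - a_1 - b_1 - ... - a_{k-1} - b_{k-1}, with distinct vertices. *)
Definition is_tpath (k : nat) (P : {set U * V}) : bool :=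
  [exists a : {ffun 'I_k -> U}, exists b : {ffun 'I_k -> V},
    [&& injectiveb a, injectiveb b &
      P == [set e | [exists i : 'I_k, exists j : 'I_k,
              (e == (a i, b j)) && ((val i == val j) || (val i == (val j).+1)%N)]]]].

Definition is_family (k : nat) (F : {set {set U * V}}) : bool :=
  [forall P in F, is_tpath k P] &&
  [forall P in F, forall Q in F, (P != Q) ==>
     [disjoint lefts P & lefts Q] && [disjoint rights P & rights Q]].

Definition is_covering (k : nat) (F : {set {set U * V}}) : bool :=
  [&& is_family k F,
      (\bigcup_(P in F) lefts P) == [set: U] &
      (\bigcup_(P in F) rights P) == [set: V]].
End Bip.

(* L^{(t)}_n as a polynomial in y = x^2 :
   L_n(y) = sum_F (-1)^{|F|} y^{n - k|F|} *)
Definition Lpoly (t n : nat) : {poly int} :=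
  \sum_(F : {set {set 'I_n * 'I_n}} | is_family (kt t) F)
     ((-1) ^+ #|F|) *: 'X^(n - kt t * #|F|).

Definition mu (t n : nat) : nat :=
  #|[set F : {set {set 'I_n * 'I_n}} | is_covering (kt t) F]|.

Definition LL (t : nat) (p : {poly int}) : int :=
  \sum_(i < size p) p`_i * (mu t i)%:Z.

(* vertex set of one side of K_{n_1,n_1} ⊔ ... ⊔ K_{n_j,n_j} *)
Definition DU (j : nat) (n : 'I_j -> nat) : finType := {i : 'I_j & 'I_(n i)}.

Definition inhom (j : nat) (n : 'I_j -> nat) (P : {set DU n * DU n}) : bool :=
  ~~ [exists i : 'I_j,
        [forall u in lefts P, tag u == i] && [forall v in rights P, tag v == i]].

(* Main.v *)
Require Import Defs.
From HB Require Import structures.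
From mathcomp Require Import all_boot all_order all_algebra.
Set Implicit Arguments. Unset Strict Implicit. Unset Printing Implicit Defensive.
Import GRing.Theory.

Section Gen.
Variables (U V : finType) (k : nat).
Implicit Types (P Q : {set U * V}) (F S C D : {set {set U * V}}).

Definition LF (F : {set {set U * V}}) : {set U} := \bigcup_(P in F) lefts P.
Definition RF (F : {set {set U * V}}) : {set V} := \bigcup_(P in F) rights P.

Definition tp (a : 'I_k -> U) (b : 'I_k -> V) : {set U * V} :=
  [set e | [exists i : 'I_k, exists j : 'I_k,
              (e == (a i, b j)) && ((val i == val j) || (val i == (val j).+1)%N)]].

Lemma tp_ext a a' b b' : a =1 a' -> b =1 b' -> tp a b = tp a' b'.
Proof.
move=> Ha Hb; apply/setP=> e; rewrite !inE.
by apply: eq_existsb => i; apply: eq_existsb => j; rewrite Ha Hb.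
Qed.

Lemma lefts_tp a b : lefts (tp a b) = a @: setT.
Proof.
apply/setP=> u; rewrite /lefts /rights; apply/imsetP/imsetP=> [[e] | [i _ ->]].
  rewrite inE => /existsP[i /existsP[j /andP[/eqP -> _]]] ->.
  by exists i.
exists (a i, b i); last by []. by rewrite inE; apply/existsP; exists i; apply/existsP; exists i; rewrite !eqxx.
Qed.

Lemma rights_tp a b : rights (tp a b) = b @: setT.
Proof.
apply/setP=> u; rewrite /lefts /rights; apply/imsetP/imsetP=> [[e] | [i _ ->]].
  rewrite inE => /existsP[i /existsP[j /andP[/eqP -> _]]] ->.
  by exists j.
exists (a i, b i); last by []. by rewrite inE; apply/existsP; exists i; apply/existsP; exists i; rewrite !eqxx.
Qed.

Lemma tpathP P : reflect (exists a : 'I_k -> U, exists b : 'I_k -> V,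
   [/\ injective a, injective b & P = tp a b]) (is_tpath k P).
Proof.
apply: (iffP idP).
  case/existsP=> a /existsP[b /and3P[/injectiveP ia /injectiveP ib /eqP ->]].
  by exists a, b.
case=> a [b [ia ib ->]]; apply/existsP; exists (finfun a); apply/existsP; exists (finfun b).
apply/and3P; split.
- by apply/injectiveP=> x y; rewrite !ffunE => /ia.
- by apply/injectiveP=> x y; rewrite !ffunE => /ib.
by apply/eqP; apply: tp_ext => x; rewrite ffunE.
Qed.

Lemma card_lefts P : is_tpath k P -> #|lefts P| = k.
Proof.
by case/tpathP=> a [b [ia ib ->]]; rewrite lefts_tp card_imset // cardsT card_ord.
Qed.

Lemma card_rights P : is_tpath k P -> #|rights P| = k.
Proof.
by case/tpathP=> a [b [ia ib ->]]; rewrite rights_tp card_imset // cardsT card_ord.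
Qed.

Lemma in_lefts P e : e \in P -> e.1 \in lefts P.
Proof. by move=> He; rewrite /lefts /rights; apply/imsetP; exists e. Qed.
Lemma in_rights P e : e \in P -> e.2 \in rights P.
Proof. by move=> He; rewrite /lefts /rights; apply/imsetP; exists e. Qed.

Lemma tfamilyP F : reflect
  ((forall P, P \in F -> is_tpath k P) /\
   (forall P Q, P \in F -> Q \in F -> P != Q ->
      [disjoint lefts P & lefts Q] /\ [disjoint rights P & rights Q]))
  (is_family k F).
Proof.
apply: (iffP andP) => [[/forall_inP H1 /forall_inP H2] | [H1 H2]]; split => //.
  move=> P Q PF QF nPQ; have /forall_inP/(_ Q QF) := H2 P PF.
  by rewrite nPQ => /andP.
  by apply/forall_inP.
apply/forall_inP => P PF; apply/forall_inP => Q QF; apply/implyP=> nPQ.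
by case: (H2 P Q PF QF nPQ) => -> ->.
Qed.

Lemma family_sub S C : S \subset C -> is_family k C -> is_family k S.
Proof.
move=> /subsetP sSC /tfamilyP[H1 H2]; apply/tfamilyP; split.
  by move=> P /sSC; apply: H1.
by move=> P Q /sSC PC /sSC QC; apply: H2.
Qed.

Lemma coveringE F : is_covering k F = [&& is_family k F, LF F == setT & RF F == setT].
Proof. by []. Qed.

Lemma card_LF F : 0 < k -> is_family k F -> #|LF F| = k * #|F|.
Proof.
move=> k0 /tfamilyP[H1 H2].
have [tiF injF] : trivIset (@lefts U V @: F) /\ {in F &, injective (@lefts U V)}.
  apply: trivIimset.
    by move=> P Q PF QF nQP; case: (H2 P Q PF QF); rewrite // eq_sym.
  apply/imsetP=> [[P PF /esym/eqP]]; rewrite -cards_eq0 card_lefts ?H1 //.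
  by move/eqP=> E; move: k0; rewrite E.
rewrite mulnC -(card_in_imset injF) /LF -cover_imset.
apply: card_uniform_partition; last by apply/and3P; split => //;
  apply/imsetP=> [[P PF /esym/eqP]]; rewrite -cards_eq0 card_lefts ?H1 // => /eqP E; move: k0; rewrite E.
by move=> _ /imsetP[P PF ->]; rewrite card_lefts ?H1.
Qed.

Lemma card_RF F : 0 < k -> is_family k F -> #|RF F| = k * #|F|.
Proof.
move=> k0 /tfamilyP[H1 H2].
have [tiF injF] : trivIset (@rights U V @: F) /\ {in F &, injective (@rights U V)}.
  apply: trivIimset.
    by move=> P Q PF QF nQP; case: (H2 P Q PF QF); rewrite // eq_sym.
  apply/imsetP=> [[P PF /esym/eqP]]; rewrite -cards_eq0 card_rights ?H1 //.
  by move/eqP=> E; move: k0; rewrite E.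
rewrite mulnC -(card_in_imset injF) /RF -cover_imset.
apply: card_uniform_partition; last by apply/and3P; split => //;
  apply/imsetP=> [[P PF /esym/eqP]]; rewrite -cards_eq0 card_rights ?H1 // => /eqP E; move: k0; rewrite E.
by move=> _ /imsetP[P PF ->]; rewrite card_rights ?H1.
Qed.

End Gen.

Lemma forall_imset (T T' : finType) (h : T -> T') (A : {set T}) (p : pred T') :
  [forall x in h @: A, p x] = [forall x in A, p (h x)].
Proof.
apply/forall_inP/forall_inP => H x Hx; first by apply: H; apply: imset_f.
by case/imsetP: Hx => y Hy ->; apply: H.
Qed.

Section Transport.
Variables (U V U' V' : finType) (k : nat) (f : U -> U') (g : V -> V').
Hypotheses (injf : injective f) (injg : injective g).
Implicit Types (P Q : {set U * V}) (F S C D : {set {set U * V}}).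

Definition pm (e : U * V) : U' * V' := (f e.1, g e.2).
Lemma pm_inj : injective pm.
Proof. by move=> [x1 y1] [x2 y2] [/injf -> /injg ->]. Qed.

Definition mapP (P : {set U * V}) := pm @: P.
Definition mapF (F : {set {set U * V}}) := mapP @: F.
Lemma mapP_inj : injective mapP. Proof. exact: imset_inj pm_inj. Qed.
Lemma mapF_inj : injective mapF. Proof. exact: imset_inj mapP_inj. Qed.

Lemma lefts_map P : lefts (mapP P) = f @: lefts P.
Proof. by rewrite /lefts /mapP -!imset_comp. Qed.
Lemma rights_map P : rights (mapP P) = g @: rights P.
Proof. by rewrite /rights /mapP -!imset_comp. Qed.

Lemma tp_map (a : 'I_k -> U) (b : 'I_k -> V) : mapP (tp a b) = tp (f \o a) (g \o b).
Proof.
apply/setP=> e'; apply/imsetP/idP.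
  case=> e; rewrite inE => /existsP[i /existsP[j /andP[/eqP -> c]]] ->.
  by rewrite inE; apply/existsP; exists i; apply/existsP; exists j; rewrite eqxx.
rewrite inE => /existsP[i /existsP[j /andP[/eqP -> c]]].
exists (a i, b j) => //.
by rewrite inE; apply/existsP; exists i; apply/existsP; exists j; rewrite eqxx.
Qed.

Lemma tpath_map P : is_tpath k (mapP P) = is_tpath k P.
Proof.
apply/idP/idP; last first.
  case/tpathP=> a [b [ia ib ->]]; apply/tpathP; exists (f \o a), (g \o b).
  split; [exact: inj_comp | exact: inj_comp | exact: tp_map].
case/tpathP=> a' [b' [ia ib EP]].
have : forall i, exists x, f x = a' i.
  move=> i; have : a' i \in lefts (mapP P) by rewrite EP lefts_tp imset_f.
  by rewrite lefts_map => /imsetP[x _ ->]; exists x.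
case/fin_all_exists => a Ha.
have : forall i, exists x, g x = b' i.
  move=> i; have : b' i \in rights (mapP P) by rewrite EP rights_tp imset_f.
  by rewrite rights_map => /imsetP[x _ ->]; exists x.
case/fin_all_exists => b Hb.
apply/tpathP; exists a, b; split.
- by move=> x y Exy; apply: ia; rewrite -!Ha Exy.
- by move=> x y Exy; apply: ib; rewrite -!Hb Exy.
apply: mapP_inj; rewrite EP tp_map; apply: tp_ext => x /=; by rewrite ?Ha ?Hb.
Qed.

Lemma disj_map (A B : {set U}) : [disjoint f @: A & f @: B] = [disjoint A & B].
Proof. by rewrite -!setI_eq0 -imsetI ?imset_eq0 // => x y _ _; apply: injf. Qed.
Lemma disj_mapg (A B : {set V}) : [disjoint g @: A & g @: B] = [disjoint A & B].
Proof. by rewrite -!setI_eq0 -imsetI ?imset_eq0 // => x y _ _; apply: injg. Qed.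

Lemma family_map F : is_family k (mapF F) = is_family k F.
Proof.
rewrite /is_family /mapF !forall_imset; congr andb.
  by apply: eq_forallb_in => P _; rewrite tpath_map.
apply: eq_forallb_in => P _; rewrite forall_imset; apply: eq_forallb_in => Q _.
by rewrite (inj_eq mapP_inj) !lefts_map !rights_map disj_map disj_mapg.
Qed.

Lemma LF_map F : LF (mapF F) = f @: LF F.
Proof.
rewrite /LF /mapF big_imset; last by move=> ? ? _ _; apply: mapP_inj.
rewrite (big_morph _ (imsetU f) (imset0 f)); apply: eq_bigr => P _.
exact: lefts_map.
Qed.
Lemma RF_map F : RF (mapF F) = g @: RF F.
Proof.
rewrite /RF /mapF big_imset; last by move=> ? ? _ _; apply: mapP_inj.
rewrite (big_morph _ (imsetU g) (imset0 g)); apply: eq_bigr => P _.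
exact: rights_map.
Qed.

Definition preF (F' : {set {set U' * V'}}) := [set P | mapP P \in F'].

Lemma mapF_pre (F' : {set {set U' * V'}}) : LF F' \subset f @: setT -> RF F' \subset g @: setT ->
  mapF (preF F') = F'.
Proof.
move=> /subsetP sL /subsetP sR.
have key : forall P' : {set U' * V'}, P' \in F' -> mapP (pm @^-1: P') = P'.
  move=> P' HP'; apply/setP=> e'; apply/imsetP/idP.
    by case=> e; rewrite inE => He ->.
  move=> He'.
  have /sL/imsetP[x _ Ex] : e'.1 \in LF F'.
    by apply/bigcupP; exists P' => //; apply: in_lefts.
  have /sR/imsetP[y _ Ey] : e'.2 \in RF F'.
    by apply/bigcupP; exists P' => //; apply: in_rights.
  exists (x, y); last by rewrite /pm /= -Ex -Ey; case: (e').
  by rewrite inE /pm /= -Ex -Ey; case: (e') He'.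
apply/setP=> P'; apply/imsetP/idP.
  by case=> P; rewrite inE => HP ->.
move=> HP'; exists (pm @^-1: P'); last by rewrite key.
by rewrite inE key.
Qed.

End Transport.

Lemma enum_inj (T : finType) (X : {set T}) :
  exists f : 'I_#|X| -> T, injective f /\ f @: setT = X.
Proof.
exists (@enum_val T (mem X)); split; first exact: enum_val_inj.
apply/setP=> x; apply/imsetP/idP; first by case=> i _ ->; apply: enum_valP.
by move=> Hx; exists (enum_rank_in Hx x); rewrite ?enum_rankK_in.
Qed.

Lemma enum_inj' (T : finType) (X : {set T}) m : #|X| = m ->
  exists f : 'I_m -> T, injective f /\ f @: setT = X.
Proof. by move=> <-; apply: enum_inj. Qed.

Lemma count_cov (U' V' : finType) k m (X : {set U'}) (Y : {set V'}) :
  #|X| = m -> #|Y| = m ->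
  #|[set F : {set {set U' * V'}} | is_family k F && (LF F == X) && (RF F == Y)]|
  = #|[set F : {set {set 'I_m * 'I_m}} | is_covering k F]|.
Proof.
move=> /enum_inj' [f [injf Ef]] /enum_inj' [g [injg Eg]].
rewrite -(card_imset _ (mapF_inj injf injg)); apply: eq_card => F'.
rewrite inE; apply/idP/imsetP.
  case/andP=> /andP[fF /eqP LX] /eqP RY.
  have EF : mapF f g (preF f g F') = F'.
    by apply: mapF_pre => //; rewrite ?LX ?RY ?Ef ?Eg.
  exists (preF f g F'); last by rewrite EF.
  rewrite inE coveringE -(family_map k injf injg) EF fF /=.
  apply/andP; split; apply/eqP.
    by apply: (imset_inj injf); rewrite -(LF_map injf injg) EF LX Ef.
  by apply: (imset_inj injg); rewrite -(RF_map injf injg) EF RY Eg.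
case=> F; rewrite inE coveringE => /and3P[fF /eqP L1 /eqP R1] ->.
by rewrite family_map // (LF_map injf injg) (RF_map injf injg) L1 R1 Ef Eg !eqxx fF.
Qed.
Import Num.Theory.
Local Open Scope ring_scope.

Lemma alt_sum (T : finType) (A : {set T}) :
  \sum_(S : {set T} | S \subset A) (-1)^+#|S| = (A == set0)%:R :> int.
Proof.
have [->|[x xA]] := set_0Vmem A.
  by rewrite eqxx (big_pred1 set0) ?cards0 ?expr0 // => S; rewrite /= subset0.
rewrite (_ : (A == set0) = false); last by apply/negbTE/set0Pn; exists x.
pose tau (S : {set T}) := if x \in S then S :\ x else x |: S.
have tauK : involutive tau.
  move=> S; rewrite /tau; case: (boolP (x \in S)) => xS.
    by rewrite setD11 setD1K.
  by rewrite setU11 setU1K.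
have sgn (S : {set T}) : (-1)^+#|tau S| = - (-1)^+#|S| :> int.
  rewrite /tau; case: ifP => xS.
    by rewrite (cardsD1 x S) xS add1n exprS mulN1r opprK.
  by rewrite cardsU1 xS add1n exprS mulN1r.
set s := (X in X = _).
have : s = - s.
  rewrite {1}/s (reindex_inj (inv_inj tauK)) /= -sumrN; apply: eq_big => S.
    rewrite /tau; case: (boolP (x \in S)) => xS.
      by rewrite -{2}(setD1K xS) subUset sub1set xA.
    by rewrite subUset sub1set xA.
  by move=> _; apply: sgn.
move=> /eqP; rewrite -subr_eq0 opprK -mulr2n mulrn_eq0 /= => /eqP.
done.
Qed.

Section IE.
Variables (U V : finType) (k : nat) (hom : pred {set U * V}).
Hypothesis k0 : (0 < k)%N.
Implicit Types (P Q : {set U * V}) (F S C D : {set {set U * V}}).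

Definition cc S := [set D | is_family k D && (LF D == ~: LF S) && (RF D == ~: RF S)].

Lemma lefts_neq0 P : is_tpath k P -> lefts P != set0.
Proof. by move=> tP; rewrite -cards_eq0 (card_lefts tP) -lt0n. Qed.

Lemma disj_cross (W : finType) (phi : {set U * V} -> {set W}) S D P Q :
  \bigcup_(R in D) phi R = (~: \bigcup_(R in S) phi R) -> P \in S -> Q \in D ->
  [disjoint phi P & phi Q].
Proof.
move=> E PS QD; rewrite -setI_eq0; apply/eqP/setP => u; rewrite !inE.
apply/negbTE/andP => -[uP uQ].
have : u \in \bigcup_(R in D) phi R by apply/bigcupP; exists Q.
by rewrite E inE; apply/negP/negPn; apply/bigcupP; exists P.
Qed.

Lemma cover_compl (W : finType) (phi : {set U * V} -> {set W}) C S :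
  S \subset C ->
  (forall P Q, P \in C -> Q \in C -> P != Q -> [disjoint phi P & phi Q]) ->
  \bigcup_(R in C) phi R = setT ->
  \bigcup_(R in C :\: S) phi R = (~: \bigcup_(R in S) phi R).
Proof.
move=> SC H E; apply/setP => u; rewrite inE; apply/bigcupP/idP.
  case=> P /setDP[PC PS] uP; apply/bigcupP => -[Q QS uQ].
  have nPQ : P != Q by apply: contraNneq PS => ->.
  move: (H P Q PC (subsetP SC Q QS) nPQ); rewrite -setI_eq0 => /eqP/setP/(_ u).
  by rewrite !inE uP uQ.
move=> uS; have : u \in [set: W] by [].
rewrite -E => /bigcupP[P PC uP]; exists P => //; rewrite inE PC andbT.
by apply: contra uS => PS; apply/bigcupP; exists P.
Qed.

Lemma family_U S D : is_family k S -> is_family k D ->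
  LF D = ~: LF S -> RF D = ~: RF S -> is_family k (S :|: D).
Proof.
move=> /tfamilyP[HS1 HS2] /tfamilyP[HD1 HD2] EL ER; apply/tfamilyP; split.
  by move=> P /setUP[]; [apply: HS1 | apply: HD1].
have cr P Q : P \in S -> Q \in D ->
    [disjoint lefts P & lefts Q] /\ [disjoint rights P & rights Q].
  by move=> PS QD; split; [apply: (disj_cross EL) | apply: (disj_cross ER)].
move=> P Q /setUP[] PX /setUP[] QX nPQ.
- exact: HS2.
- exact: cr.
- by case: (cr Q P QX PX) => ? ?; rewrite disjoint_sym [[disjoint rights _ & _]]disjoint_sym.
- exact: HD2.
Qed.

Lemma cc_disj S D : D \in cc S -> [disjoint D & S].
Proof.
rewrite inE => /andP[/andP[fD /eqP LD] _]; rewrite -setI_eq0; apply/eqP/setP => P.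
rewrite !inE; apply/negbTE/andP => -[PD PS].
have /set0Pn[u uP] := lefts_neq0 ((tfamilyP _ _ fD).1 P PD).
have : u \in LF D by apply/bigcupP; exists P.
by rewrite LD inE; apply/negP/negPn; apply/bigcupP; exists P.
Qed.

Lemma cc_card S : is_family k S ->
  #|cc S| = #|[set C | is_covering k C && (S \subset C)]|.
Proof.
move=> fS.
rewrite -(@card_in_imset _ _ (fun D => S :|: D) (cc S)); last first.
  move=> D1 D2 H1 H2 /= E.
  rewrite -(setDidPl (cc_disj H1)) -(setDidPl (cc_disj H2)).
  by rewrite -[D1 :\: S]set0U -[D2 :\: S]set0U -(setDv S) -!setDUl E.
apply: eq_card => C; rewrite [in RHS]inE; apply/imsetP/idP.
  case=> D HD ->; move: (HD); rewrite inE => /andP[/andP[fD /eqP LD] /eqP RD].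
  rewrite coveringE family_U // subsetUl /LF /RF !bigcup_setU.
  by rewrite -/(LF D) -/(RF D) LD RD !setUCr !eqxx.
case/andP; rewrite coveringE => /and3P[fC /eqP LC /eqP RC] SC.
exists (C :\: S); last first.
  apply/setP => P; rewrite !inE; case: (boolP (P \in S)) => //= PS.
  by rewrite (subsetP SC).
have [HC1 HC2] := tfamilyP _ _ fC.
rewrite inE (family_sub _ fC) ?subsetDl //=.
rewrite /LF /RF !(@cover_compl _ _ C S) //; last first.
- by move=> P Q PC QC nPQ; case: (HC2 P Q PC QC nPQ).
- by move=> P Q PC QC nPQ; case: (HC2 P Q PC QC nPQ).
by rewrite !eqxx.
Qed.

Lemma incl_excl :
  \sum_(S | is_family k S && [forall P in S, hom P]) (-1)^+#|S| * (#|cc S|)%:Z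
  = (#|[set C | is_covering k C && [forall P in C, ~~ hom P]]|)%:Z.
Proof.
transitivity (\sum_(S | is_family k S && [forall P in S, hom P])
                \sum_(C | is_covering k C && (S \subset C)) ((-1)^+#|S| : int)).
  apply: eq_bigr => S /andP[fS _]; rewrite cc_card //.
  rewrite (eq_bigl (fun C => C \in [set C | is_covering k C && (S \subset C)]));
    last by move=> C; rewrite inE.
  by rewrite sumr_const -mulr_natr natz.
rewrite (exchange_big_dep (fun C => is_covering k C)) /=; last by move=> S C _ /andP[].
transitivity (\sum_(C | is_covering k C) (([set P in C | hom P] == set0)%:R : int)).
  apply: eq_bigr => C cC; rewrite -alt_sum; apply: eq_bigl => S.
  apply/idP/idP.
    case/andP=> /andP[_ hS] /andP[_ SC]; apply/subsetP => P PS.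
    by rewrite inE (subsetP SC) //= (forall_inP hS).
  move=> sub; have SC : S \subset C.
    by apply: (subset_trans sub); apply/subsetP => P; rewrite inE => /andP[].
  rewrite cC SC andbT andbT.
  move: cC; rewrite coveringE => /and3P[fC _ _]; rewrite (family_sub SC fC) /=.
  by apply/forall_inP => P /(subsetP sub); rewrite inE => /andP[].
rewrite (eq_bigl (fun C => C \in [set C | is_covering k C])); last by move=> C; rewrite inE.
rewrite -natz -sumr_const.
rewrite [RHS](eq_bigl (fun C => (C \in [set C | is_covering k C]) && [forall P in C, ~~ hom P])); last first.
  by move=> C; rewrite !inE.
rewrite big_mkcondr; apply: eq_bigr => C _.
have -> : ([set P in C | hom P] == set0) = [forall P in C, ~~ hom P].
  apply/eqP/forall_inP => [E P PC | H].
    apply/negP => hP; have : P \in (set0 : {set {set U * V}}) by rewrite -E inE PC hP.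
    by rewrite inE.
  apply/setP => P; rewrite !inE; apply/negbTE/andP => -[PC hP].
  by move: (H P PC); rewrite hP.
by case: [forall P in C, ~~ hom P].
Qed.

End IE.

Lemma LLE t (p : {poly int}) d : (size p <= d)%N ->
  LL t p = \sum_(i < d) p`_i * (mu t i)%:Z.
Proof.
move=> sd; rewrite /LL (big_ord_widen d (fun i => p`_i * (mu t i)%:Z)) //.
rewrite big_mkcond /=; apply: eq_bigr => i _; case: ltnP => // H.
by rewrite nth_default // mul0r.
Qed.

Lemma LL_sum t (I : finType) (A : {pred I}) (c : I -> int) (m : I -> nat) :
  LL t (\sum_(x in A) c x *: 'X^(m x)) = \sum_(x in A) c x * (mu t (m x))%:Z.
Proof.
set d := (\sum_(x in A) m x).+1%N.
have mlt x : x \in A -> (m x < d)%N.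
  by move=> xA; rewrite ltnS (bigD1 x) //= leq_addr.
rewrite (@LLE _ _ d); last first.
  apply/leq_sizeP => i Hi; rewrite coef_sum big1 // => x xA.
  rewrite coefZ coefXn (_ : (i == m x) = false) ?mulr0 //.
  by apply/negbTE; rewrite neq_ltn (leq_trans (mlt x xA) Hi) orbT.
under eq_bigr => i _ do rewrite coef_sum mulr_suml.
rewrite exchange_big /=; apply: eq_bigr => x xA.
rewrite (bigD1 (Ordinal (mlt x xA))) //= coefZ coefXn eqxx mulr1 big1 ?addr0 //.
move=> i ne; rewrite coefZ coefXn (_ : (i == m x :> nat) = false) ?mulr0 ?mul0r //.
by apply: contraNF ne => /eqP E; apply/eqP/val_inj.
Qed.

Section Block.
Variables (t j : nat) (n : 'I_j -> nat).
Hypothesis k0 : (0 < kt t)%N.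
Local Notation W := (DU n).
Implicit Types (P Q : {set W * W}) (F S C D : {set {set W * W}}).

Definition inblock (i : 'I_j) P :=
  [forall u in lefts P, tag u == i] && [forall v in rights P, tag v == i].
Definition homb P := [exists i, inblock i P].
Lemma inhomE P : inhom P = ~~ homb P. Proof. by []. Qed.

Definition emb (i : 'I_j) (x : 'I_(n i)) : W := Tagged (fun i => 'I_(n i)) x.
Arguments emb i x : clear implicits.
Lemma emb_inj i : injective (emb i).
Proof. by move=> x y /eqP; rewrite eq_Tagged /= => /eqP. Qed.

Lemma range_emb i u : (u \in emb i @: setT) = (tag u == i).
Proof.
apply/imsetP/eqP => [[x _ ->] // | E].
by case: u E => i' x /= E; subst i'; exists x.
Qed.

Lemma inblock_sub i P : inblock i P =
  (lefts P \subset emb i @: setT) && (rights P \subset emb i @: setT).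
Proof.
rewrite /inblock; congr andb; apply/forall_inP/subsetP => H u uP;
  by [rewrite range_emb; apply: H | rewrite -range_emb; apply: H].
Qed.

Definition A i := [set F | is_family (kt t) F && [forall P in F, inblock i P]].

Lemma A_image i : A i = mapF (emb i) (emb i) @: [set F | is_family (kt t) F].
Proof.
have ie := @emb_inj i.
apply/setP => F'; rewrite inE; apply/andP/imsetP.
  case=> fF' /forall_inP bF'.
  have sL : LF F' \subset emb i @: setT.
    apply/subsetP => u /bigcupP[P PF uP].
    by move: (bF' P PF); rewrite inblock_sub => /andP[/subsetP H _]; apply: H.
  have sR : RF F' \subset emb i @: setT.
    apply/subsetP => u /bigcupP[P PF uP].
    by move: (bF' P PF); rewrite inblock_sub => /andP[_ /subsetP H]; apply: H.
  exists (preF (emb i) (emb i) F'); last by rewrite mapF_pre.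
  by rewrite inE -(family_map (kt t) ie ie) mapF_pre.
case=> F; rewrite inE => fF ->; split; first by rewrite family_map.
rewrite /mapF forall_imset; apply/forall_inP => P _.
by rewrite inblock_sub lefts_map // rights_map // !imsetS ?subsetT.
Qed.

Lemma Lpoly_block i :
  Lpoly t (n i) = \sum_(F in A i) (-1)^+#|F| *: 'X^(n i - kt t * #|F|).
Proof.
have ie := @emb_inj i.
rewrite A_image big_imset /=; last by move=> ? ? _ _; apply: mapF_inj.
rewrite /Lpoly; apply: eq_big => F; first by rewrite inE.
by move=> _; rewrite card_imset //; apply: mapP_inj.
Qed.

Lemma card_block i F : F \in A i -> (kt t * #|F| <= n i)%N.
Proof.
rewrite inE => /andP[fF /forall_inP bF]; rewrite -card_LF //.
rewrite -(card_ord (n i)) -cardsT -(card_imset _ (@emb_inj i)).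
apply: subset_leq_card; apply/subsetP => u /bigcupP[P PF uP].
by move: (bF P PF); rewrite inblock_sub => /andP[/subsetP H _]; apply: H.
Qed.

Lemma inblock_uniq P i i' : is_tpath (kt t) P -> inblock i P -> inblock i' P -> i = i'.
Proof.
move=> tP /andP[/forall_inP Hi _] /andP[/forall_inP Hi' _].
have /set0Pn[u uP] := lefts_neq0 k0 tP.
by move: (Hi u uP) (Hi' u uP) => /eqP <- /eqP.
Qed.

End Block.

Lemma card_bigcup_disj (I T : finType) (F : I -> {set T}) :
  (forall i i', i != i' -> [disjoint F i & F i']) ->
  #|\bigcup_i F i| = (\sum_i #|F i|)%N.
Proof.
move=> H.
have : forall r : seq I, uniq r -> #|\bigcup_(i <- r) F i| = (\sum_(i <- r) #|F i|)%N.
  elim=> [|i r IH] /=; first by rewrite !big_nil cards0.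
  case/andP => ir ur; rewrite !big_cons cardsU IH //.
  have -> : F i :&: \bigcup_(i0 <- r) F i0 = set0.
    apply/eqP; rewrite setI_eq0 bigcup_seq; apply: bigcup_disjoint => i' i'r.
    by apply: H; apply: contraNneq ir => ->.
  by rewrite cards0 subn0.
move=> /(_ (enum I) (enum_uniq _)).
by rewrite !big_enum.
Qed.

Section Main.
Variables (t j : nat) (n : 'I_j -> nat).
Hypothesis k0 : (0 < kt t)%N.
Local Notation W := (DU n).
Implicit Types (P Q : {set W * W}) (F S C D : {set {set W * W}}).

Definition QA (i : 'I_j) := fun F => F \in A t n i.
Definition Uf (f : {ffun 'I_j -> {set {set W * W}}}) := \bigcup_i f i.

Lemma card_W : #|W| = (\sum_(i < j) n i)%N.
Proof.
rewrite card_tagged sumnE big_map big_enum /=.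
by apply: eq_bigr => i _; rewrite card_ord.
Qed.

Lemma fQ f : f \in family QA -> forall i, f i \in A t n i.
Proof. by move/familyP. Qed.

Lemma disj_f f : f \in family QA -> forall i i', i != i' -> [disjoint f i & f i'].
Proof.
move=> /fQ Hf i i' nii; rewrite -setI_eq0; apply/eqP/setP => P; rewrite !inE.
apply/negbTE/andP => -[Pi Pi'].
move: (Hf i) (Hf i'); rewrite !inE => /andP[/tfamilyP[H1 _] /forall_inP B1].
move=> /andP[_ /forall_inP B2].
by move/negP: nii; apply; apply/eqP; apply: (inblock_uniq k0 (H1 P Pi) (B1 P Pi) (B2 P Pi')).
Qed.

Lemma H_image : [set S | is_family (kt t) S && [forall P in S, homb P]]
  = [set Uf f | f in family QA].
Proof.
apply/setP => S; rewrite inE; apply/idP/imsetP.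
  case/andP=> fS /forall_inP hS.
  exists [ffun i => [set P in S | inblock i P]].
    apply/familyP => i; rewrite /QA ffunE inE.
    rewrite (@family_sub _ _ _ _ S) //=; last by apply/subsetP => P; rewrite inE => /andP[].
      by apply/forall_inP => P; rewrite inE => /andP[].
  apply/setP => P; apply/idP/bigcupP.
    move=> PS; case/existsP: (hS P PS) => i bi; exists i => //.
    by rewrite ffunE inE PS bi.
  by case=> i _; rewrite ffunE inE => /andP[].
case=> f Hf ->; have Hfi := fQ Hf.
apply/andP; split; last first.
  apply/forall_inP => P /bigcupP[i _ Pi]; apply/existsP; exists i.
  by move: (Hfi i); rewrite inE => /andP[_ /forall_inP]; apply.
apply/tfamilyP; split.
  move=> P /bigcupP[i _ Pi].
  by move: (Hfi i); rewrite inE => /andP[/tfamilyP[H1 _] _]; apply: H1.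
move=> P Q /bigcupP[i _ Pi] /bigcupP[i' _ Qi'] nPQ.
have [Eii|nii] := eqVneq i i'; first subst i'.
  by move: (Hfi i); rewrite inE => /andP[/tfamilyP[_ H2] _]; apply: H2.
move: (Hfi i) (Hfi i'); rewrite !inE => /andP[_ /forall_inP B1] /andP[_ /forall_inP B2].
move: (B1 P Pi) (B2 Q Qi') => /andP[/forall_inP L1 /forall_inP R1] /andP[/forall_inP L2 /forall_inP R2].
split; rewrite -setI_eq0; apply/eqP/setP => u; rewrite !inE;
  apply/negbTE/andP => -[u1 u2].
  by move: (L1 u u1) (L2 u u2) nii => /eqP -> /eqP ->; rewrite eqxx.
by move: (R1 u u1) (R2 u u2) nii => /eqP -> /eqP ->; rewrite eqxx.
Qed.

Lemma Uf_inj : {in family QA &, injective Uf}.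
Proof.
move=> f g Hf Hg E; apply/ffunP => i.
have key h : h \in family QA -> h i = [set P in Uf h | inblock i P].
  move=> Hh; have Hhi := fQ Hh.
  apply/setP => P; rewrite inE; apply/idP/andP.
    move=> Pi; split; first by apply/bigcupP; exists i.
    by move: (Hhi i); rewrite inE => /andP[_ /forall_inP]; apply.
  case=> /bigcupP[i' _ Pi'] bi.
  move: (Hhi i'); rewrite inE => /andP[/tfamilyP[H1 _] /forall_inP B].
  by rewrite (inblock_uniq k0 (H1 P Pi') bi (B P Pi')).
by rewrite (key f Hf) (key g Hg) E.
Qed.

End Main.

Theorem mainTheorem16 (t j : nat) (n : 'I_j -> nat) :
  odd t ->
  LL t (\prod_(i < j) Lpoly t (n i)) =
  (#|[set F : {set {set DU n * DU n}} |
        is_covering (kt t) F && [forall P in F, inhom P]]|)%:Z.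
Proof.
move=> ot.
have k0 : (0 < kt t)%N by rewrite /kt half_gt0 ltnS odd_gt0.
under eq_bigr => i _ do rewrite (Lpoly_block t n i).
rewrite (bigA_distr_big_dep (@QA t j n)) /=.
under eq_bigr => f _ do rewrite scaler_prod !prodrXr.
rewrite LL_sum.
transitivity (\sum_(S : {set {set DU n * DU n}} | is_family (kt t) S && [forall P in S, homb P])
   (-1)^+#|S| * (#|cc (kt t) S|)%:Z); last first.
  by rewrite incl_excl.
rewrite (eq_bigl (fun S => S \in [set Uf f | f in family (@QA t j n)])); last first.
  by move=> S; rewrite -(H_image t n) inE.
rewrite big_imset /=; last exact: Uf_inj.
apply: eq_bigr => f Hf.
have Hfi := fQ Hf.
have cU : #|Uf f| = (\sum_i #|f i|)%N by apply: card_bigcup_disj; apply: (disj_f k0 Hf).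
have : Uf f \in [set Uf f | f in family (@QA t j n)] by apply: imset_f.
rewrite -(H_image t n) inE => /andP[fU _].
have E : (\sum_i (n i - kt t * #|f i|))%N = (#|DU n| - kt t * #|Uf f|)%N.
  rewrite card_W cU big_distrr /= sumnB //.
  by move=> i _; apply: (card_block k0).
rewrite cU; congr (_ * _); congr (Posz _).
rewrite /mu /cc (@count_cov _ _ _ (\sum_i (n i - kt t * #|f i|))%N) //.
  by rewrite cardsCs setCK (card_LF k0 fU) E.
by rewrite cardsCs setCK (card_RF k0 fU) E.
Qed.
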